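(* Let $\mathcal{F}:\mathcal{M}(\mathcal{X}\times\mathcal{Y})\to\mathbb{R}\cup\{+\infty\}$ be convex, lower semi-continuous and separably $*$-increasing, and assume there exists $\pi\in\Pi(\mathbb{P},\mathbb{Q})$ with $\mathcal{F}(\pi)<\infty$. Then $$\mathrm{Cost}(\mathbb{P},\mathbb{Q})=\sup_{v\in\mathcal{C}(\mathcal{Y})}\ \inf_{\pi\in\Pi(\mathbb{P})}\mathcal{L}(v,\pi)=\sup_{v\in\mathcal{C}(\mathcal{Y})}\ \inf_{\pi\in\Pi(\mathbb{P})}\left\{\Big[\mathcal{F}(\pi)-\int_{\mathcal{Y}}v(y)\,d\pi(y)\Big]+\int_{\mathcal{Y}}v(y)\,d\mathbb{Q}(y)\right\},$$ where $\pi(y)$ denotes the marginal of $\pi$ on $\mathcal{Y}$.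
   Context: Let $D\ge 1$ and let $\mathcal{X}=\mathcal{Y}\subset\mathbb{R}^D$ be compact; $\mathbb{P}\in\mathcal{P}(\mathcal{X})$, $\mathbb{Q}\in\mathcal{P}(\mathcal{Y})$. For a compact Hausdorff space $\mathcal{S}$, $\mathcal{C}(\mathcal{S})$ is the space of continuous real functions with the sup norm, $\mathcal{M}(\mathcal{S})$ its dual (finite signed Borel measures), and $\mathcal{P}(\mathcal{S})\subset\mathcal{M}(\mathcal{S})$ the Borel probability measures; lower semi-continuity is with respect to the weak-$*$ topology. $\Pi(\mathbb{P})$ is the set of probability measures on $\mathcal{X}\times\mathcal{Y}$ whose first marginal is $\mathbb{P}$, and $\Pi(\mathbb{P},\mathbb{Q})\subset\Pi(\mathbb{P})$ those with marginals $\mathbb{P},\mathbb{Q}$. For $\mathcal{F}:\mathcal{M}(\mathcal{X}\times\mathcal{Y})\to\mathbb{R}\cup\{+\infty\}$ its convex conjugate is $\mathcal{F}^*(h)=\sup_{\pi\in\mathcal{M}(\mathcal{X}\times\mathcal{Y})}\big[\int h\,d\pi-\mathcal{F}(\pi)\big]$ for $h\in\mathcal{C}(\mathcal{X}\times\mathcal{Y})$. For $u\in\mathcal{C}(\mathcal{X}),v\in\mathcal{C}(\mathcal{Y})$, $(u\oplus v)(x,y)=u(x)+v(y)$. $\mathcal{F}$ is separably $*$-increasing if for all $u\in\mathcal{C}(\mathcal{X})$, $v\in\mathcal{C}(\mathcal{Y})$, $c\in\mathcal{C}(\mathcal{X}\times\mathcal{Y})$ with $u\oplus v\le c$ pointwise,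 $\mathcal{F}^*(u\oplus v)\le\mathcal{F}^*(c)$. The general OT cost is $\mathrm{Cost}(\mathbb{P},\mathbb{Q})=\inf_{\pi\in\Pi(\mathbb{P},\mathbb{Q})}\mathcal{F}(\pi)$. For $v\in\mathcal{C}(\mathcal{Y})$ and $\pi\in\Pi(\mathbb{P})$, $\mathcal{L}(v,\pi)=\mathcal{F}(\pi)-\int_{\mathcal{Y}}v\,d\pi_{\mathcal{Y}}+\int_{\mathcal{Y}}v\,d\mathbb{Q}$, where $\pi_{\mathcal{Y}}$ is the second marginal of $\pi$. *)

(* Defs.v *)
From HB Require Import structures.
From mathcomp Require Import all_boot all_order all_algebra.
From mathcomp Require Import all_classical all_reals all_analysis.
Set Implicit Arguments. Unset Strict Implicit. Unset Printing Implicit Defensive.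
Import Order.TTheory GRing.Theory Num.Theory.
Import numFieldNormedType.Exports.
Local Open Scope classical_set_scope.
Local Open Scope ring_scope.

Section OTDefs.
Variables (R : realType) (D : nat) (K : set 'rV[R]_D).

(** The compact space X = Y, as the subtype of points of K. *)
Definition pt := {x : 'rV[R]_D | K x}.

(** Continuity of real functions on X and on X x Y (metric subspaces of
    R^D and R^D x R^D, any norm on R^D giving the same topology). *)
Definition contX (f : pt -> R) : Prop :=
  forall (x : pt) (e : R), 0 < e -> exists2 d : R, 0 < d &
    forall y : pt, `|sval x - sval y| < d -> `|f x - f y| < e.

Definition contXY (f : pt * pt -> R) : Prop :=
  forall (z : pt * pt) (e : R), 0 < e -> exists2 d : R, 0 < d &
    forall z' : pt * pt, `|sval z.1 - sval z'.1| < d ->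
      `|sval z.2 - sval z'.2| < d -> `|f z - f z'| < e.

Definition CX := {f : pt -> R | contX f}.
Definition CXY := {f : pt * pt -> R | contXY f}.

Lemma contXY_snd (v : CX) : contXY (fun z => sval v z.2).
Proof.
case: v => v hv /= z e e0; have [d d0 hd] := hv z.2 e e0.
by exists d => // z' _ h2; apply: hd.
Qed.

Lemma contXY_fst (u : CX) : contXY (fun z => sval u z.1).
Proof.
case: u => u hu /= z e e0; have [d d0 hd] := hu z.1 e e0.
by exists d => // z' h1 _; apply: hd.
Qed.

Lemma contXY_oplus (u v : CX) : contXY (fun z => sval u z.1 + sval v z.2).
Proof.
case: u v => u hu [v hv] /= z e e0.
have e20 : 0 < e / 2 by rewrite divr_gt0.
have [d1 d10 hd1] := hu z.1 _ e20; have [d2 d20 hd2] := hv z.2 _ e20.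
exists (Num.min d1 d2); first by rewrite lt_min d10 d20.
move=> z' h1 h2.
have h1' : `|sval z.1 - sval z'.1| < d1.
  by apply: (lt_le_trans h1); rewrite ge_min lexx.
have h2' : `|sval z.2 - sval z'.2| < d2.
  by apply: (lt_le_trans h2); rewrite ge_min lexx orbT.
have := hd1 _ h1'; have := hd2 _ h2' => a b.
rewrite (_ : _ - _ = (u z.1 - u z'.1) + (v z.2 - v z'.2)); last first.
  by rewrite opprD addrACA.
apply: (le_lt_trans (ler_normD _ _)).
by rewrite [e]splitr; apply: ltrD.
Qed.

Definition liftY (v : CX) : CXY := exist _ _ (contXY_snd v).
Definition liftX (u : CX) : CXY := exist _ _ (contXY_fst u).
Definition oplus (u v : CX) : CXY := exist _ _ (contXY_oplus u v).

(** M(X x Y) = C(X x Y)^*: bounded linear functionals on C(X x Y)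
    (identified with finite signed Borel measures by Riesz; the pairing
    pi h is the integral of h against pi). *)
Definition is_measXY (pi : CXY -> R) : Prop :=
  (forall (a : R) (f g h : CXY),
     (forall z, sval h z = a * sval f z + sval g z) -> pi h = a * pi f + pi g)
  /\ exists c : R, forall (f : CXY) (b : R),
     (forall z, `|sval f z| <= b) -> `|pi f| <= c * b.

Definition is_probXY (pi : CXY -> R) : Prop :=
  is_measXY pi
  /\ (forall f : CXY, (forall z, 0 <= sval f z) -> 0 <= pi f)
  /\ (forall f : CXY, (forall z, sval f z = 1) -> pi f = 1).

Definition is_probX (mu : CX -> R) : Prop :=
  (forall (a : R) (f g h : CX),
     (forall x, sval h x = a * sval f x + sval g x) -> mu h = a * mu f + mu g)
  /\ (forall f : CX, (forall x, 0 <= sval f x) -> 0 <= mu f)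
  /\ (forall f : CX, (forall x, sval f x = 1) -> mu f = 1).

Definition PiP (P : CX -> R) : set (CXY -> R) :=
  [set pi | is_probXY pi /\ forall u : CX, pi (liftX u) = P u].
Definition PiPQ (P Q : CX -> R) : set (CXY -> R) :=
  [set pi | PiP P pi /\ forall v : CX, pi (liftY v) = Q v].

Definition never_minfty (F : (CXY -> R) -> \bar R) : Prop :=
  forall pi, is_measXY pi -> F pi != -oo%E.

Definition convexF (F : (CXY -> R) -> \bar R) : Prop :=
  forall (pi1 pi2 : CXY -> R) (t : R), is_measXY pi1 -> is_measXY pi2 ->
    0 <= t <= 1 ->
    (F (fun h => (t * pi1 h + (1 - t) * pi2 h)%R)
      <= t%:E * F pi1 + (1 - t)%R%:E * F pi2)%E.

(** Lower semicontinuity for the weak-* topology sigma(M, C): at every pi,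
    for every real t < F pi there is a basic weak-* neighbourhood of pi
    (finitely many test functions hs, radius e) on which F > t. *)
Definition wstar_lsc (F : (CXY -> R) -> \bar R) : Prop :=
  forall pi, is_measXY pi -> forall t : R, (t%:E < F pi)%E ->
    exists (n : nat) (hs : 'I_n -> CXY) (e : R), 0 < e /\
      forall pi', is_measXY pi' ->
        (forall i, `|pi' (hs i) - pi (hs i)| < e) -> (t%:E < F pi')%E.

Definition conjF (F : (CXY -> R) -> \bar R) (h : CXY) : \bar R :=
  ereal_sup [set ((pi h)%:E - F pi)%E | pi in is_measXY].

Definition sep_star_increasing (F : (CXY -> R) -> \bar R) : Prop :=
  forall (u v : CX) (c : CXY),
    (forall x y : pt, sval u x + sval v y <= sval c (x, y)) ->
    (conjF F (oplus u v) <= conjF F c)%E.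

Definition Cost (F : (CXY -> R) -> \bar R) (P Q : CX -> R) : \bar R :=
  ereal_inf [set F pi | pi in PiPQ P Q].

Definition Lag (F : (CXY -> R) -> \bar R) (Q : CX -> R) (v : CX)
  (pi : CXY -> R) : \bar R :=
  (F pi - (pi (liftY v))%:E + (Q v)%:E)%E.

End OTDefs.

(* Main.v *)
Require Import Defs.
From HB Require Import structures.
From mathcomp Require Import all_boot all_order all_algebra.
From mathcomp Require Import all_classical all_reals all_analysis.
From mathcomp Require Import lra ring.
Import Order.TTheory GRing.Theory Num.Theory.
Import numFieldNormedType.Exports.
Local Open Scope classical_set_scope.
Local Open Scope ring_scope.

Section HB.
Variables (R : realType) (m : nat) (p : ('I_m -> R) -> R).
Hypothesis psub : forall x y, p (fun i => x i + y i) <= p x + p y.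
Hypothesis phom : forall (a : R) x, 0 < a -> p (fun i => a * x i) <= a * p x.

Definition suppk (k : nat) (x : 'I_m -> R) := forall i : 'I_m, (k <= i)%N -> x i = 0.
Definition lin (lam x : 'I_m -> R) := \sum_i lam i * x i.

Lemma lin_add lam x y : lin lam (fun i => x i + y i) = lin lam x + lin lam y.
Proof. by rewrite /lin -big_split /=; apply: eq_bigr => i _; rewrite mulrDr. Qed.
Lemma lin_scale lam (a : R) x : lin lam (fun i => a * x i) = a * lin lam x.
Proof. by rewrite /lin mulr_sumr; apply: eq_bigr => i _; rewrite mulrCA. Qed.

Lemma hb_step k (hk : (k < m)%N) lam0 :
  (forall x, suppk k x -> lin lam0 x <= p x) ->
  exists lam : 'I_m -> R, (forall i : 'I_m, (i < k)%N -> lam i = lam0 i) /\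
    (forall x, suppk k.+1 x -> lin lam x <= p x).
Proof.
move=> H0.
pose ek : 'I_m -> R := fun i => if val i == k then 1 else 0.
pose A := [set z | exists x b, suppk k x /\ 0 < b /\
   z = (lin lam0 x - p (fun i => x i - b * ek i)) / b].
pose B := [set z | exists x a, suppk k x /\ 0 < a /\
   z = (p (fun i => x i + a * ek i) - lin lam0 x) / a].
have AB : forall u v, A u -> B v -> u <= v.
  move=> u v [x [b [sx [b0 ->]]]] [x' [a [sx' [a0 ->]]]].
  have key : a * lin lam0 x + b * lin lam0 x' <=
     a * p (fun i => x i - b * ek i) + b * p (fun i => x' i + a * ek i).
    have sxx : suppk k (fun i => a * x i + b * x' i).
      by move=> i ki; rewrite sx // sx' // !mulr0 addr0.
    have := H0 _ sxx; rewrite lin_add !lin_scale => h1.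
    apply: (le_trans h1).
    have -> : (fun i => a * x i + b * x' i) =
      (fun i => (fun j => a * (x j - b * ek j)) i + (fun j => b * (x' j + a * ek j)) i).
      by apply: funext => i /=; rewrite mulrBr mulrDr mulrCA; lra.
    apply: (le_trans (psub _ _)); apply: lerD; exact: phom.
  rewrite ler_pdivrMr // mulrAC ler_pdivlMr //.
  move: key; nra.
have nA : A !=set0.
  exists ((lin lam0 (fun=> 0) - p (fun i => 0 - 1 * ek i)) / 1).
  by exists (fun=> 0), 1; split=> //; split=> //.
have nB : B !=set0.
  exists ((p (fun i => 0 + 1 * ek i) - lin lam0 (fun=> 0)) / 1).
  by exists (fun=> 0), 1; split=> //; split=> //.
have hsA : has_sup A.
  split=> //; case: nB => v Bv; exists v => u Au; exact: AB.
pose c := sup A.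
have cA : forall u, A u -> u <= c by move=> u Au; apply: sup_upper_bound.
have cB : forall v, B v -> c <= v.
  by move=> v Bv; apply: ge_sup => // u Au; exact: AB.
exists (fun i : 'I_m => if (i < k)%N then lam0 i else if val i == k then c else 0).
split; first by move=> i ->.
move=> x sx.
pose x' : 'I_m -> R := fun i => if (i < k)%N then x i else 0.
have sx' : suppk k x' by move=> i ki; rewrite /x' ltnNge ki.
pose a := x (Ordinal hk).
have xe : x = (fun i => x' i + a * ek i).
  apply: funext => i; rewrite /x' /ek /a.
  case: ltnP => ik.
    by rewrite (ltn_eqF ik) mulr0 addr0.
  case: eqP => ek'; last first.
    by rewrite mulr0 addr0; apply: sx; rewrite ltn_neqAle ik andbT eq_sym; apply/eqP.
  by rewrite mulr1 add0r; congr x; apply: val_inj.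
have linx : lin (fun i : 'I_m => if (i < k)%N then lam0 i else if val i == k then c else 0) x
   = lin lam0 x' + c * a.
  rewrite {1}xe lin_add lin_scale; congr (_ + _).
    rewrite /lin; apply: eq_bigr => i _; rewrite /x'; case: ifP => //.
    by rewrite !mulr0.
  rewrite mulrC; congr (_ * _).
  rewrite /lin (bigD1 (Ordinal hk)) //= big1 ?addr0.
    by rewrite /ek /= eqxx ltnn mulr1.
  move=> i /eqP ni; rewrite /ek; case: eqP => e; last by rewrite mulr0.
  by exfalso; apply: ni; apply: val_inj.
rewrite linx.
have := H0 _ sx' => h0.
case: (ltgtP a 0) => ha.
-
  have : A ((lin lam0 x' - p (fun i => x' i - (- a) * ek i)) / (- a)).
    by exists x', (- a); split=> //; split=> //; rewrite oppr_gt0.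
  move/cA; rewrite ler_pdivrMr ?oppr_gt0 // => h.
  rewrite [in p x]xe (_ : (fun i => x' i + a * ek i) = (fun i => x' i - - a * ek i)).
    by move: h; nra.
  by apply: funext => i; rewrite mulNr opprK.
-
  have : B ((p (fun i => x' i + a * ek i) - lin lam0 x') / a).
    by exists x', a; split=> //; split.
  move/cB; rewrite ler_pdivlMr // => h.
  by rewrite [in p x]xe; move: h; nra.
- rewrite ha mulr0 addr0; apply: (le_trans h0).
  have -> : p x = p x' by congr p; rewrite xe ha; apply: funext => i; rewrite mul0r addr0.
  done.
Qed.

Lemma hb_full k (lam0 : 'I_m -> R) : (k <= m)%N ->
  (forall x, suppk k x -> lin lam0 x <= p x) ->
  exists lam, (forall i : 'I_m, (i < k)%N -> lam i = lam0 i) /\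
    (forall x, lin lam x <= p x).
Proof.
move=> km; move: {2}(m - k)%N (erefl (m - k)%N) => d.
elim: d k km lam0 => [|d IH] k km lam0 hd H0.
  have kmE : k = m by apply/eqP; rewrite eqn_leq km /= -subn_eq0 hd.
  exists lam0; split=> // x; apply: H0 => i; by rewrite kmE leqNgt ltn_ord.

have hk : (k < m)%N by rewrite -subn_gt0 hd.
have [lam1 [e1 H1]] := @hb_step k hk lam0 H0.
have hd1 : (m - k.+1)%N = d by rewrite subnS hd.
have [lam [e H]] := IH k.+1 hk lam1 hd1 H1.
exists lam; split=> // i ik; rewrite e ?e1 //; exact: ltnW.
Qed.
End HB.
Arguments suppk {R m}.
Arguments lin {R m}.
Arguments hb_full {R m p}.

Section Sep.
Variables (R : realType) (n : nat) (S : ('I_n -> R) -> R -> Prop).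
Variables (q : 'I_n -> R) (t s0 e : R).
Hypothesis e0 : 0 < e.
Hypothesis Sconv : forall y1 s1 y2 s2 (th : R), S y1 s1 -> S y2 s2 -> 0 <= th <= 1 ->
  exists y s, S y s /\ (forall i, y i = th * y1 i + (1 - th) * y2 i) /\
     s <= th * s1 + (1 - th) * s2.
Hypothesis Sball : forall y s, S y s -> (forall i, `|y i - q i| < e) -> t < s.
Hypothesis Sq : S q s0.

Definition V (w : 'I_n.+1 -> R) := exists y s (z : 'I_n -> R) r, S y s /\
  (forall i, `|z i| < e) /\ 0 < r /\ w ord0 = s0 + 1 - s - r /\
  forall i, w (lift ord0 i) = q i + z i - y i.

Lemma Vconv w1 w2 (th : R) : V w1 -> V w2 -> 0 <= th <= 1 ->
  V (fun j => th * w1 j + (1 - th) * w2 j).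
Proof.
move=> [y1 [s1 [z1 [r1 [S1 [z1e [r10 [w10 w1l]]]]]]]].
move=> [y2 [s2 [z2 [r2 [S2 [z2e [r20 [w20 w2l]]]]]]]] /andP[th0 th1].
have [y [s [Sy [ye se]]]] := @Sconv y1 s1 y2 s2 th S1 S2 (ltac:(by apply/andP; split; [exact: th0|exact: th1])).
exists y, s, (fun i => th * z1 i + (1 - th) * z2 i),
  (th * r1 + (1 - th) * r2 + (th * s1 + (1 - th) * s2 - s)).
split=> //; split.
  move=> i; apply: (le_lt_trans (ler_normD _ _)).
  rewrite !normrM (ger0_norm th0) (@ger0_norm _ (1 - th)); last by rewrite subr_ge0.
  have a1 := z1e i; have a2 := z2e i.
  have h1 : 0 <= th * (e - `|z1 i|) by apply: mulr_ge0 => //; lra.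
  case: (ltP th 1) => tht.
    have h2 : 0 < (1 - th) * (e - `|z2 i|) by apply: mulr_gt0; lra.
    lra.
  have -> : th = 1 by lra.
  lra.
split; first by nra.
split; first by rewrite w10 w20; lra.
by move=> i; rewrite w1l w2l ye; lra.
Qed.

Definition G (w : 'I_n.+1 -> R) := [set th : R | 0 < th /\ V (fun j => th^-1 * w j)].
Definition pg w := inf (G w).

Lemma Gne w : G w !=set0.
Proof.
pose M := 1 + `|w ord0| + \sum_i `|w (lift ord0 i)| / e.
have sum_ge i : `|w (lift ord0 i)| / e <= \sum_i `|w (lift ord0 i)| / e.
  rewrite (bigD1 i) //= lerDl; apply: sumr_ge0 => j _; apply: divr_ge0 => //; exact: ltW.
have sge : 0 <= \sum_i `|w (lift ord0 i)| / e.
  by apply: sumr_ge0 => j _; apply: divr_ge0 => //; exact: ltW.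
have M0 : 0 < M by rewrite /M; have := normr_ge0 (w ord0); lra.
exists M; split => //.
exists q, s0, (fun i => M^-1 * w (lift ord0 i)), (1 - M^-1 * w ord0).
split=> //; split.
  move=> i; rewrite normrM ger0_norm ?invr_ge0 ?(ltW M0) //.
  rewrite mulrC ltr_pdivrMr //.
  have := sum_ge i; rewrite ler_pdivrMr // => h.
  have := mulr_ge0 (ltW e0) (normr_ge0 (w ord0)).
  rewrite /M !mulrDr mulr1 [e * (\sum_i _)]mulrC.
  move: h; set Sm := (\sum_i _) * e; set a := e * _; move=> h ha; have := e0; lra.
split.
  rewrite subr_gt0 mulrC ltr_pdivrMr // mul1r.
  apply: (le_lt_trans (ler_norm _)); rewrite /M; lra.
split; first by lra.
by move=> i; lra.
Qed.

Lemma hasinfG w : has_inf (G w).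
Proof. split; first exact: Gne. by exists 0 => th [/ltW]. Qed.

Lemma pg_le w th : G w th -> pg w <= th.
Proof. by move=> Gth; apply: ge_inf => //; case: (hasinfG w). Qed.

Lemma pg_ge0 w : 0 <= pg w.
Proof. by apply: lb_le_inf; [exact: Gne | move=> th [/ltW]]. Qed.


Lemma pg_sub w1 w2 : pg (fun i => w1 i + w2 i) <= pg w1 + pg w2.
Proof.
apply/ler_addgt0Pr => eta eta0.
have eta2 : 0 < eta / 2 by rewrite divr_gt0.
have [th1 [th10 V1] lt1] := inf_adherent eta2 (hasinfG w1).
have [th2 [th20 V2] lt2] := inf_adherent eta2 (hasinfG w2).
rewrite -/(pg w1) in lt1; rewrite -/(pg w2) in lt2.
have : pg (fun i => w1 i + w2 i) <= th1 + th2.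
  apply: pg_le; split; first by lra.
  have thc : 0 <= th1 / (th1 + th2) <= 1.
    apply/andP; split; first by apply: divr_ge0; lra.
    by rewrite ler_pdivrMr; lra.
  have := @Vconv _ _ _ V1 V2 thc.
  have -> : (fun j => th1 / (th1 + th2) * (th1^-1 * w1 j) + (1 - th1 / (th1 + th2)) * (th2^-1 * w2 j))
     = (fun j => (th1 + th2)^-1 * (w1 j + w2 j)).
    apply: funext => j.
    have h1 : th1 != 0 by rewrite gt_eqF.
    have h2 : th2 != 0 by rewrite gt_eqF.
    have h3 : th1 + th2 != 0 by rewrite gt_eqF //; lra.
    rewrite [1]( _ : 1 = (th1 + th2) / (th1 + th2)); last by rewrite divff.
    field; apply/and3P; split => //.
  done.
lra.
Qed.

Lemma pg_hom (a : R) w : 0 < a -> pg (fun i => a * w i) <= a * pg w.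
Proof.
move=> a0; rewrite -ler_pdivrMl //; apply: lb_le_inf; first exact: Gne.
move=> th [th0 Vth]; rewrite ler_pdivrMl //; apply: pg_le; split.
  by rewrite mulr_gt0.
have -> : (fun j => (a * th)^-1 * (a * w j)) = (fun j => th^-1 * w j) => //.
apply: funext => j; rewrite invfM mulrACA mulVf ?mul1r // gt_eqF //.
Qed.


Lemma ts0 : t < s0.
Proof. by apply: (@Sball q s0 Sq) => i; rewrite subrr normr0. Qed.

Lemma sep_main : exists lam : 'I_n -> R, forall y s, S y s ->
  t + \sum_i lam i * (y i - q i) <= s.
Proof.
have ts := ts0.
pose kap := s0 - t + 1.
have kap0 : 0 < kap by rewrite /kap; lra.
pose lam0 : 'I_n.+1 -> R := fun j => if j == ord0 then kap^-1 else 0.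
have base : forall x, suppk 1 x -> lin lam0 x <= pg x.
  move=> x sx.
  have -> : lin lam0 x = kap^-1 * x ord0.
    rewrite /lin big_ord_recl /lam0 eqxx big1 ?addr0 // => i _.
    by rewrite eq_sym (negbTE (neq_lift _ _)) mul0r.
  apply: lb_le_inf; first exact: Gne.
  move=> th [th0 [y [s [z [r [Sy [ze [r0 [w0 wl]]]]]]]]].
  have yq : forall i, `|y i - q i| < e.
    move=> i; have := wl i; rewrite sx // => h.
    rewrite (_ : y i - q i = z i) ?ze //.
    by move: h; rewrite mulr0 => h; lra.
  have := @Sball y s Sy yq => tls.
  rewrite mulrC ler_pdivrMr // -ler_pdivrMl //.
  rewrite mulrC; move: w0; rewrite /kap => w0; lra.
have [lam [lam_0 lamH]] := hb_full pg_sub pg_hom 1 lam0 (isT : (1 <= n.+1)%N) base.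
have l0 : lam ord0 = kap^-1 by rewrite lam_0 // /lam0 eqxx.
exists (fun i => - kap * lam (lift ord0 i)).
move=> y s Sy; apply/ler_addgt0Pr => r r0.
pose w : 'I_n.+1 -> R := fun j => match unlift ord0 j with
   Some i => q i - y i | None => s0 + 1 - s - r end.
have Vw : V w.
  exists y, s, (fun=> 0), r; split=> //; split; first by move=> i; rewrite normr0.
  split=> //; split; first by rewrite /w unlift_none.
  by move=> i; rewrite /w liftK addr0.
have : lin lam w <= 1.
  apply: le_trans (lamH w) _; apply: pg_le; split=> //.
  by have -> : (fun j => 1^-1 * w j) = w by apply: funext => j; rewrite invr1 mul1r.
rewrite /lin big_ord_recl l0 /w unlift_none.
under eq_bigr => i _ do rewrite liftK.
have -> : \sum_i - kap * lam (lift ord0 i) * (y i - q i) =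
    kap * \sum_(i < n) lam (lift ord0 i) * (q i - y i).
  rewrite mulr_sumr; apply: eq_bigr => i _; ring.
set Sm := \sum_(i < n) _.
move=> h.
have h2 : kap * (kap^-1 * (s0 + 1 - s - r) + Sm) <= kap * 1 by rewrite ler_pM2l.
rewrite mulrDr mulrA mulfV ?gt_eqF // mul1r mulr1 in h2.
move: h2; rewrite /kap; lra.
Qed.

End Sep.

Section Fun.
Variables (R : realType) (D : nat) (K : set 'rV[R]_D).

Lemma comb_small (a : R) (e : R) (u1 u2 v1 v2 : R) : 0 < e ->
  `|u1 - u2| < e / 2 / (`|a| + 1) -> `|v1 - v2| < e / 2 ->
  `|(a * u1 + v1) - (a * u2 + v2)| < e.
Proof.
move=> e0 hu hv.
rewrite (_ : _ - _ = a * (u1 - u2) + (v1 - v2)); last by ring.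
apply: (le_lt_trans (ler_normD _ _)); rewrite normrM.
have a1 : 0 < `|a| + 1 by have := normr_ge0 a; lra.
have : `|a| * `|u1 - u2| <= (`|a| + 1) * `|u1 - u2|.
  by apply: ler_wpM2r => //; lra.
have : (`|a| + 1) * `|u1 - u2| < e / 2.
  by rewrite mulrC -ltr_pdivlMr.
lra.
Qed.

Lemma contX_cst (c : R) : contX (K:=K) (fun _ => c).
Proof. by move=> x e e0; exists 1 => // y _; rewrite subrr normr0. Qed.

Lemma contX_comb (a : R) (f g : pt K -> R) : contX f -> contX g ->
  contX (fun x => a * f x + g x).
Proof.
move=> hf hg x e e0.
have e1 : 0 < e / 2 / (`|a| + 1).
  by rewrite !divr_gt0 //; have := normr_ge0 a; lra.
have e2 : 0 < e / 2 by rewrite divr_gt0.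
have [d1 d10 hd1] := hf x _ e1; have [d2 d20 hd2] := hg x _ e2.
exists (Num.min d1 d2); first by rewrite lt_min d10 d20.
move=> y hy; apply: comb_small => //.
  by apply: hd1; apply: (lt_le_trans hy); rewrite ge_min lexx.
by apply: hd2; apply: (lt_le_trans hy); rewrite ge_min lexx orbT.
Qed.

Lemma contXY_cst (c : R) : contXY (K:=K) (fun _ => c).
Proof. by move=> x e e0; exists 1 => // y _ _; rewrite subrr normr0. Qed.

Lemma contXY_comb (a : R) (f g : pt K * pt K -> R) : contXY f -> contXY g ->
  contXY (fun x => a * f x + g x).
Proof.
move=> hf hg x e e0.
have e1 : 0 < e / 2 / (`|a| + 1).
  by rewrite !divr_gt0 //; have := normr_ge0 a; lra.
have e2 : 0 < e / 2 by rewrite divr_gt0.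
have [d1 d10 hd1] := hf x _ e1; have [d2 d20 hd2] := hg x _ e2.
exists (Num.min d1 d2); first by rewrite lt_min d10 d20.
move=> y hy1 hy2; apply: comb_small => //.
  by apply: hd1; [apply: (lt_le_trans hy1)|apply: (lt_le_trans hy2)]; rewrite ge_min lexx.
by apply: hd2; [apply: (lt_le_trans hy1)|apply: (lt_le_trans hy2)]; rewrite ge_min lexx orbT.
Qed.

Definition cstX (c : R) : CX K := exist _ _ (contX_cst c).
Definition combX (a : R) (f g : CX K) : CX K :=
  exist _ _ (@contX_comb a _ _ (svalP f) (svalP g)).
Definition cstXY (c : R) : CXY K := exist _ _ (contXY_cst c).
Definition combXY (a : R) (f g : CXY K) : CXY K :=
  exist _ _ (@contXY_comb a _ _ (svalP f) (svalP g)).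

Definition linXY (phi : CXY K -> R) := forall (a : R) (f g h : CXY K),
  (forall z, sval h z = a * sval f z + sval g z) -> phi h = a * phi f + phi g.
Definition posXY (phi : CXY K -> R) :=
  forall f : CXY K, (forall z, 0 <= sval f z) -> 0 <= phi f.
Definition normXY (phi : CXY K -> R) :=
  forall f : CXY K, (forall z, sval f z = 1) -> phi f = 1.

Section Phi.
Variable phi : CXY K -> R.
Hypotheses (hl : linXY phi) (hp : posXY phi) (hn : normXY phi).

Lemma phi0 : phi (cstXY 0) = 0.
Proof.
have := hl 1 (cstXY 0) (cstXY 0) (cstXY 0).
rewrite mul1r => h.
have {}h := h (ltac:(by move=> z /=; rewrite mul1r addr0)). have : phi (cstXY 0) + 0 = phi (cstXY 0) + phi (cstXY 0).
  by rewrite addr0.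
by move/addrI.
Qed.

Lemma phi_cst (c : R) : phi (cstXY c) = c.
Proof.
have h : forall z, sval (cstXY c) z = c * sval (cstXY 1) z + sval (cstXY 0) z.
  by move=> z /=; lra.
by rewrite (hl _ _ _ _ h) hn // phi0 mulr1 addr0.
Qed.

Lemma phi_bound (f : CXY K) (b : R) : (forall z, `|sval f z| <= b) -> `|phi f| <= b.
Proof.
move=> hb; rewrite ler_norml; apply/andP; split.
  have := hl 1 f (cstXY b) (combXY 1 f (cstXY b)) (fun z => erefl).
  rewrite phi_cst mul1r => h; rewrite -subr_ge0 opprK -h; apply: hp => z /=.
  by have := hb z; rewrite ler_norml => /andP[]; lra.
have := hl (-1) f (cstXY b) (combXY (-1) f (cstXY b)) (fun z => erefl).
rewrite phi_cst => h; have : 0 <= phi (combXY (-1) f (cstXY b)).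
  apply: hp => z /=; have := hb z; rewrite ler_norml => /andP[]; lra.
by rewrite h; lra.
Qed.
End Phi.

Lemma prob_lin phi : is_probXY phi -> linXY phi.
Proof. by case=> [[]]. Qed.
Lemma prob_pos phi : is_probXY phi -> posXY phi.
Proof. by case=> _ []. Qed.
Lemma prob_norm phi : is_probXY phi -> normXY phi.
Proof. by case=> _ []. Qed.

Lemma prob_of phi : linXY phi -> posXY phi -> normXY phi -> is_probXY phi.
Proof.
move=> hl hp hn; split; last by split.
split=> //; exists 1 => f b hb; rewrite mul1r; exact: phi_bound.
Qed.

Arguments prob_lin {phi}. Arguments prob_pos {phi}. Arguments prob_norm {phi}.

Lemma mix_prob (p1 p2 : CXY K -> R) (th : R) : is_probXY p1 -> is_probXY p2 ->
  is_probXY (fun h => th * p1 h + (1 - th) * p2 h) \/ ~ (0 <= th <= 1) .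
Proof.
move=> h1 h2; case: (boolP (0 <= th <= 1)) => [/andP[t0 t1]|]; last by right; apply/negP.
left; apply: prob_of.
- move=> a f g h hh; rewrite (prob_lin h1 _ _ _ _ hh) (prob_lin h2 _ _ _ _ hh); ring.
- move=> f hf; have := prob_pos h1 _ hf; have := prob_pos h2 _ hf => a b.
  by apply: addr_ge0; apply: mulr_ge0 => //; lra.
- by move=> f hf; rewrite (prob_norm h1 _ hf) (prob_norm h2 _ hf); ring.
Qed.


Lemma nbhs_pair (w : 'rV[R]_D * 'rV[R]_D) (d : R) : 0 < d ->
  nbhs w [set w' | `|w.1 - w'.1| < d /\ `|w.2 - w'.2| < d].
Proof.
move=> d0; have := nbhsx_ballx w d d0; apply: filterS => -[a b] [/= h1 h2].
by move: h1 h2; rewrite -!ball_normE /ball_ /=.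
Qed.

Lemma bnd_XY (cK : compact K) (h : CXY K) : exists M, forall z, `|sval h z| <= M.
Proof.
case: (pselect (exists M, forall z, `|sval h z| <= M)) => // nb.
have unb M : exists z, M < `|sval h z|.
  apply: contrapT => hM; apply: nb; exists M => z; rewrite leNgt; apply/negP => hz.
  by apply: hM; exists z.
pose B (M : R) := [set w : 'rV[R]_D * 'rV[R]_D | exists z : pt K * pt K,
  sval z.1 = w.1 /\ sval z.2 = w.2 /\ M < `|sval h z|].
pose FF := filter_from [set: R] B.
have FFf : Filter FF.
  apply: filter_fromT_filter; first by exists 0.
  move=> i j; exists (Num.max i j) => w [z [e1 [e2 hz]]].
  by split; exists z; split => //; split => //; apply: le_lt_trans hz; rewrite ?le_max lexx ?orbT.
have FFp : ProperFilter FF.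
  apply: filter_from_proper => i _; have [z hz] := unb i.
  by exists (sval z.1, sval z.2); exists z.
have FKK : FF (K `*` K).
  exists 0 => // w [z [e1 [e2 _]]]; split; [rewrite -e1 | rewrite -e2]; exact: svalP.
have [w [[Kw1 Kw2] cw]] := compact_setX cK cK FFp FKK.
pose zs : pt K * pt K := (exist _ w.1 Kw1, exist _ w.2 Kw2).
have [d d0 hd] := svalP h zs 1 ltr01.
have := cw (B (`|sval h zs| + 1)) _ (ltac:(by exists (`|sval h zs| + 1))) (nbhs_pair w d d0).
case=> w' [[z [e1 [e2 hz]]] [h1 h2]].
have := hd z; rewrite /= e1 e2 => /(_ h1 h2) hlt.
have : `|sval h z| <= `|sval h zs| + `|sval h zs - sval h z|.
  rewrite {1}(_ : sval h z = sval h zs - (sval h zs - sval h z)); last by ring.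
  exact: ler_normB.
lra.
Qed.

Definition linX (mu : CX K -> R) := forall (a : R) (f g h : CX K),
  (forall x, sval h x = a * sval f x + sval g x) -> mu h = a * mu f + mu g.

Lemma linX0 mu : linX mu -> mu (cstX 0) = 0.
Proof.
move=> hl; have h : forall x, sval (cstX 0) x = 1 * sval (cstX 0) x + sval (cstX 0) x.
  by move=> x /=; rewrite mul1r addr0.
have := hl _ _ _ _ h; rewrite mul1r => e.
have : mu (cstX 0) + 0 = mu (cstX 0) + mu (cstX 0) by rewrite addr0.
by move/addrI.
Qed.

Lemma combo_ex (n : nat) (lam : 'I_n -> R) (g : 'I_n -> CX K) :
  exists v : CX K, forall mu, linX mu -> mu v = \sum_i lam i * mu (g i).
Proof.
elim: n lam g => [|n IH] lam g.
  by exists (cstX 0) => mu hl; rewrite big_ord0 linX0.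
have [v' hv'] := IH (fun i => lam (lift ord0 i)) (fun i => g (lift ord0 i)).
exists (combX (lam ord0) (g ord0) v') => mu hl.
rewrite big_ord_recl -hv' //; apply: hl => x //.
Qed.

Lemma linX_liftY (pi : CXY K -> R) : linXY pi -> linX (fun v => pi (liftY v)).
Proof. by move=> hl a f g h hh; apply: hl => z /=; apply: hh. Qed.

Lemma linX_prob (mu : CX K -> R) : is_probX mu -> linX mu.
Proof. by case. Qed.

End Fun.
Arguments bnd_XY {R D K}.
Arguments phi_bound {R D K phi}.
Arguments phi_cst {R D K phi}.
Arguments prob_lin {R D K phi}.
Arguments prob_pos {R D K phi}.
Arguments prob_norm {R D K phi}.
Arguments prob_of {R D K phi}.
Arguments combo_ex {R D K}.
Arguments linX_liftY {R D K pi}.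
Arguments linX_prob {R D K mu}.
Arguments mix_prob {R D K}.
Arguments linX0 {R D K mu}.
Arguments cstX {R D K}.
Arguments cstXY {R D K}.
Arguments combX {R D K}.
Arguments combXY {R D K}.
Arguments linXY {R D K}.
Arguments posXY {R D K}.
Arguments normXY {R D K}.
Arguments linX {R D K}.

Lemma zero_of_small (R : realType) (x c : R) : 0 <= c ->
  (forall d, 0 < d -> `|x| <= c * d) -> x = 0.
Proof.
move=> c0 h; apply/eqP; rewrite -normr_eq0; apply/eqP.
apply: le_anti; rewrite normr_ge0 andbT.
have c1 : 0 < c + 1 by lra.
rewrite leNgt; apply/negP => x0.
have := h (`|x| / (2 * (c + 1))).
have d0 : 0 < `|x| / (2 * (c + 1)) by rewrite divr_gt0 // mulr_gt0.
move=> /(_ d0); rewrite mulrA ler_pdivlMr ?mulr_gt0 // => hh.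
move: hh; nra.
Qed.

Section Prod.
Variables (R : realType) (T : Type).
Import ArrowAsProduct.
Definition Ixc := {classic T}.

Lemma nbh1 (p : Ixc -> R) (h : Ixc) (d : R) : 0 < d ->
  nbhs p [set pi : Ixc -> R | `|pi h - p h| < d].
Proof.
move=> d0; have hc := @proj_continuous Ixc (fun _ => R) h p.
have hb := nbhsx_ballx (proj h p) d d0.
have h1 := hc _ hb.
move: h1; apply: (@filterS _ _ (@nbhs_filter _ p)) => pi.
by rewrite /= -ball_normE /ball_ /= distrC.
Qed.

Lemma nbhI (p : Ixc -> R) (A B : set (Ixc -> R)) :
  nbhs p A -> nbhs p B -> nbhs p (A `&` B).
Proof. exact: (@filterI _ _ (@nbhs_filter _ p)). Qed.

Lemma nbh_fin (p : Ixc -> R) n (hs : 'I_n -> Ixc) (d : R) : 0 < d ->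
  nbhs p [set pi : Ixc -> R | forall i, `|pi (hs i) - p (hs i)| < d].
Proof.
move=> d0.
have h := (@filter_forall _ _ (fun i => [set pi : Ixc -> R | `|pi (hs i) - p (hs i)| < d])
   (nbhs p) (@nbhs_filter _ p) (fun i => nbh1 p (hs i) d d0)).
exact h.
Qed.
End Prod.
Arguments nbh1 {R T}.
Arguments nbhI {R T p A B}.
Arguments nbh_fin {R T}.

Section Comp.
Variables (R : realType) (D : nat) (K : set 'rV[R]_D).
Variables (F : (CXY K -> R) -> \bar R) (P Q : CX K -> R).
Hypotheses (cK : compact K) (lsc : wstar_lsc F).
Import ArrowAsProduct.

Notation Ix := (Ixc (CXY K)).

Lemma step1 (t : R) : (t%:E < Cost F P Q)%E ->
  exists (n : nat) (gs : nat -> CX K) (eps : R), 0 < eps /\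
  forall pi, PiP P pi ->
    (forall i, (i < n)%N -> `|pi (liftY (gs i)) - Q (gs i)| < eps) ->
    (t%:E < F pi)%E.
Proof.
move=> tC; apply: contrapT => H.
have H' : forall n (gs : nat -> CX K) eps, 0 < eps -> exists pi, PiP P pi /\
   (forall i, (i < n)%N -> `|pi (liftY (gs i)) - Q (gs i)| < eps) /\
   (F pi <= t%:E)%E.
  move=> n gs eps e0; apply: contrapT => hn; apply: H; exists n, gs, eps.
  split => // pi hpi hnear; rewrite ltNge; apply/negP => hle; apply: hn.
  by exists pi.
have [M hM] := choice (bnd_XY cK).
pose Bs (j : nat * (nat -> CX K) * R) : set (forall i : Ix, R) :=
  [set pi | PiP P pi /\ (F pi <= t%:E)%E /\
     forall i, (i < j.1.1)%N -> `|pi (liftY (j.1.2 i)) - Q (j.1.2 i)| < j.2].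
pose FF := filter_from [set j | 0 < j.2] Bs.
have FFf : Filter FF.
  apply: filter_from_filter.
    by exists (0%N, (fun=> cstX 0), 1) => /=.
  move=> [[n1 g1] e1] [[n2 g2] e2] /= e10 e20.
  exists (n1 + n2, (fun i => if (i < n1)%N then g1 i else g2 (i - n1)%N), Num.min e1 e2)%N.
    by rewrite /= lt_min e10 e20.
  move=> pi [hpi [hF hn]] /=; split; split=> //; split=> // i hi.
    move: hi => /= hi; have := hn i (leq_trans hi (leq_addr _ _)); rewrite /= hi => h.
    by apply: (lt_le_trans h); rewrite ge_min lexx.
  move: hi => /= hi; have := hn (n1 + i)%N; rewrite /= ltn_add2l hi ltnNge leq_addr /= addKn => /(_ isT) h.
  by apply: (lt_le_trans h); rewrite ge_min lexx orbT.
have FFp : ProperFilter FF.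
  apply: filter_from_proper => -[[n g] e] /= e0.
  have [pi [hpi [hn hF]]] := H' n g e e0.
  by exists pi.
pose box := [set f : forall i : Ix, R | forall i, `[- M i, M i]%classic (f i)].
have FFbox : FF box.
  exists (0%N, (fun=> cstX 0), 1) => //= pi [[hprob _] _] i.
  have := phi_bound (prob_lin hprob) (prob_pos hprob) (prob_norm hprob) i (M i) (hM i).
  by rewrite /= in_itv /= ler_norml.
have cb0 := (@tychonoff Ix (fun _ => R) (fun i => `[- M i, M i]%classic) (fun i => @segment_compact R _ _)).
have cb : compact box by exact: cb0.
have [p [pbox pcl]] := cb FF FFp FFbox.
have approx : forall N j, nbhs p N -> 0 < j.2 -> exists pi, Bs j pi /\ N pi.
  move=> N j NN j0; have [pi [h1 h2]] := pcl (Bs j) N (ltac:(by exists j)) NN.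
  by exists pi.
pose j0 : nat * (nat -> CX K) * R := (0%N, fun=> cstX 0, 1).
have j00 : 0 < j0.2 by [].
have plin : linXY p.
  move=> a f g h hh.
  apply/eqP; rewrite -subr_eq0; apply/eqP.
  apply: (@zero_of_small R _ (`|a| + 2)); first by have := normr_ge0 a; lra.
  move=> d d0.
  have NN := nbhI (nbhI (nbh1 p h d d0) (nbh1 p f d d0)) (nbh1 p g d d0).
  have [pi [[[hpi _] _] [[N1 N2] N3]]] := approx _ j0 NN j00.
  have e := prob_lin hpi _ _ _ _ hh.
  rewrite (_ : p h - (a * p f + p g) =
     - (pi h - p h) + a * (pi f - p f) + (pi g - p g)); last by rewrite e; ring.
  apply: (le_trans (ler_normD _ _)); apply: (le_trans (lerD (ler_normD _ _) (lexx _))).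
  rewrite normrN normrM.
  have : `|a| * `|pi f - p f| <= `|a| * d.
    by apply: ler_wpM2l => //; exact: ltW.
  move: N1 N3 => /= N1 N3; lra.
have ppos : posXY p.
  move=> f hf; rewrite leNgt; apply/negP => hneg.
  have d0 : 0 < - p f by rewrite oppr_gt0.
  have [pi [[[hpi _] _] N1]] := approx _ j0 (nbh1 p f (- p f) d0) j00.
  have := prob_pos hpi _ hf; move: N1 => /= /ltr_normlW; lra.
have pnorm : normXY p.
  move=> f hf; apply/eqP; rewrite -subr_eq0; apply/eqP.
  apply: (@zero_of_small R _ 1) => // d d0; rewrite mul1r.
  have [pi [[[hpi _] _] N1]] := approx _ j0 (nbh1 p f d d0) j00.
  have := prob_norm hpi _ hf => e; move: N1 => /=; rewrite e distrC => h; exact: ltW.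
have pX : forall u, p (liftX u) = P u.
  move=> u; apply/eqP; rewrite -subr_eq0; apply/eqP.
  apply: (@zero_of_small R _ 1) => // d d0; rewrite mul1r.
  have [pi [[[hpi hm] _] N1]] := approx _ j0 (nbh1 p (liftX u) d d0) j00.
  move: N1 => /=; rewrite hm distrC => h; exact: ltW.
have pY : forall v, p (liftY v) = Q v.
  move=> v; apply/eqP; rewrite -subr_eq0; apply/eqP.
  apply: (@zero_of_small R _ 2) => // d d0.
  have [pi [[_ [_ hn]] N1]] := approx _ (1%N, fun=> v, d) (nbh1 p (liftY v) d d0) d0.
  have := hn 0%N isT; move: N1 => /= N1 N2.
  rewrite (_ : p (liftY v) - Q v = - (pi (liftY v) - p (liftY v)) + (pi (liftY v) - Q v)); last by ring.
  apply: (le_trans (ler_normD _ _)); rewrite normrN; lra.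
have pprob : is_probXY p by apply: prob_of.
have pF : (F p <= t%:E)%E.
  rewrite leNgt; apply/negP => tp.
  have [n [hs [e [e0 hl]]]] := lsc p pprob.1 t tp.
  have [pi [[[hpi _] [hF _]] N1]] := approx _ j0 (nbh_fin p n hs e e0) j00.
  have := hl pi hpi.1 N1; rewrite ltNge hF //.
have : (Cost F P Q <= F p)%E.
  apply: ereal_inf_lbound; exists p => //; split => //; split => //.
move=> h; have := lt_le_trans tC (le_trans h pF); rewrite ltxx //.
Qed.

End Comp.

Lemma le_of_forall_lt (R : realType) (A B : \bar R) :
  (forall t : R, (t%:E < A)%E -> (t%:E <= B)%E) -> (A <= B)%E.
Proof.
move=> H; case: A H => [r| |] H; last by rewrite leNye.
- case: B H => [b| |] H; last 2 first.
  + by rewrite leey.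
  + have := H (r - 1) (ltac:(rewrite lte_fin; lra)); by rewrite leeNy_eq.
  rewrite lee_fin; apply/ler_addgt0Pr => e e0.
  have := H (r - e) (ltac:(rewrite lte_fin; lra)); rewrite lee_fin; lra.
- case: B H => [b| |] H; last 2 first.
  + by [].
  + by have := H 0 (ltry _); rewrite leeNy_eq.
  by have := H (b + 1) (ltry _); rewrite lee_fin => h; exfalso; lra.
Qed.

Section Main.
Variables (R : realType) (D : nat) (K : set 'rV[R]_D).
Variables (F : (CXY K -> R) -> \bar R) (P Q : CX K -> R).
Hypotheses (cK : compact K) (hP : is_probX P) (hQ : is_probX Q).
Hypotheses (nmi : never_minfty F) (cvx : convexF F) (lsc : wstar_lsc F).
Hypothesis feas : exists pi, PiPQ P Q pi /\ (F pi < +oo)%E.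

Lemma sup_le_cost :
  (ereal_sup [set ereal_inf [set Lag F Q v pi | pi in PiP P] | v in [set: CX K]]
   <= Cost F P Q)%E.
Proof.
apply: ge_ereal_sup => _ [v _ <-].
apply: le_ereal_inf_tmp => _ [pi [hpi hQpi] <-].
apply: (le_trans (ereal_inf_lbound _)); first by exists pi.
by rewrite /Lag hQpi subeK.
Qed.


Lemma cost_le_sup :
  (Cost F P Q <=
   ereal_sup [set ereal_inf [set Lag F Q v pi | pi in PiP P] | v in [set: CX K]])%E.
Proof.
apply: le_of_forall_lt => t tC.
have [n [gs [eps [eps0 hst]]]] := @step1 R D K F P Q cK lsc t tC.
have [pi0 [[hpi0 hQ0] Ffin0]] := feas.
have pi0m : F pi0 != -oo%E := nmi pi0 hpi0.1.1.
have F0fin : F pi0 \is a fin_num by rewrite fin_numE pi0m (lt_eqF Ffin0).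
pose s0 := fine (F pi0).
pose g : 'I_n -> CX K := fun i => gs (val i).
pose q : 'I_n -> R := fun i => Q (g i).
pose S := fun (y : 'I_n -> R) (s : R) => exists pi, PiP P pi /\
   (forall i, y i = pi (liftY (g i))) /\ (F pi <= s%:E)%E.
have Sq : S q s0.
  exists pi0; split=> //; split; first by move=> i; rewrite /q hQ0.
  by rewrite /s0 fineK.
have Sball : forall y s, S y s -> (forall i, `|y i - q i| < eps) -> t < s.
  move=> y s [pi [hpi [hy hF]]] hb.
  have : (t%:E < F pi)%E.
    apply: (hst pi hpi) => i hi; have := hb (Ordinal hi); rewrite hy //.
  by move=> h; have := lt_le_trans h hF; rewrite lte_fin.
have Sconv : forall (y1 : 'I_n -> R) (s1 : R) (y2 : 'I_n -> R) (s2 th : R),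
   S y1 s1 -> S y2 s2 -> 0 <= th <= 1 ->
   exists (y : 'I_n -> R) (s : R), S y s /\
     (forall i : 'I_n, y i = th * y1 i + (1 - th) * y2 i) /\
     s <= th * s1 + (1 - th) * s2.
  move=> y1 s1 y2 s2 th [pi1 [h1 [e1 f1]]] [pi2 [h2 [e2 f2]]] thb.
  have /andP[th0 th1] := thb.
  pose pm := fun h => th * pi1 h + (1 - th) * pi2 h.
  have pmp : is_probXY pm.
    by case: (mix_prob pi1 pi2 th h1.1 h2.1) => // nn; exfalso; apply: nn.
  exists (fun i => th * y1 i + (1 - th) * y2 i), (th * s1 + (1 - th) * s2).
  split; last by split.
  exists pm; split.
    split=> // u; rewrite /pm h1.2 h2.2; ring.
  split; first by move=> i; rewrite /pm e1 e2.
  apply: (le_trans (cvx pi1 pi2 th h1.1.1 h2.1.1 thb)).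
  rewrite (EFinD (th * s1)) (EFinM th s1) (EFinM (1 - th) s2); apply: leeD; apply: lee_wpmul2l => //; rewrite lee_fin //; lra.
have [lam hlam] := @sep_main R n S q t s0 eps eps0 Sconv Sball Sq.
have [v hv] := combo_ex n lam g.
apply: (le_trans _ (ereal_sup_ubound _)); last by exists v.
apply: le_ereal_inf_tmp => _ [pi hpi <-].
rewrite /Lag.
have Fm : F pi != -oo%E := nmi pi hpi.1.1.
case E: (F pi) Fm => [s| |] // _; last by rewrite leey.
have Spi : S (fun i => pi (liftY (g i))) s by exists pi; split=> //; split=> //; rewrite E.
have h := hlam _ _ Spi.
have ev1 := hv _ (linX_liftY (prob_lin hpi.1)); simpl in ev1.
have ev2 := hv _ (linX_prob hQ).
rewrite ev1 ev2 -EFinB -EFinD lee_fin.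
have : \sum_i lam i * ((fun i => pi (liftY (g i))) i - q i) =
  \sum_i lam i * pi (liftY (g i)) - \sum_i lam i * Q (g i).
  by rewrite -sumrB; apply: eq_bigr => i _; rewrite /q mulrBr.
move: h; lra.
Qed.

End Main.

Theorem theorem1' (R : realType) (D : nat) (K : set 'rV[R]_D)
  (F : (CXY K -> R) -> \bar R) (P Q : CX K -> R) :
  (1 <= D)%N -> compact K ->
  is_probX P -> is_probX Q ->
  never_minfty F -> convexF F -> wstar_lsc F -> sep_star_increasing F ->
  (exists pi, PiPQ P Q pi /\ (F pi < +oo)%E) ->
  Cost F P Q =
    ereal_sup [set ereal_inf [set Lag F Q v pi | pi in PiP P] | v in [set: CX K]]
  /\
  ereal_sup [set ereal_inf [set Lag F Q v pi | pi in PiP P] | v in [set: CX K]]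
  = ereal_sup [set ereal_inf
        [set ((F pi - (pi (liftY v))%:E) + (Q v)%:E)%E | pi in PiP P]
      | v in [set: CX K]].
Proof.
move=> _ cK hP hQ nmi cvx lsc _ feas; split; last by [].
apply: le_anti; apply/andP; split.
  exact: cost_le_sup.
exact: sup_le_cost.
Qed.

Theorem theorem1 (R : realType) (D : nat) (K : set 'rV[R]_D)
  (F : (CXY K -> R) -> \bar R) (P Q : CX K -> R) :
  (1 <= D)%N -> compact K ->
  is_probX P -> is_probX Q ->
  never_minfty F -> convexF F -> wstar_lsc F -> sep_star_increasing F ->
  (exists pi, PiPQ P Q pi /\ (F pi < +oo)%E) ->
  Cost F P Q =
    ereal_sup [set ereal_inf [set Lag F Q v pi | pi in PiP P] | v in [set: CX K]]
  /\
  ereal_sup [set ereal_inf [set Lag F Q v pi | pi in PiP P] | v in [set: CX K]]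
  = ereal_sup [set ereal_inf
        [set ((F pi - (pi (liftY v))%:E) + (Q v)%:E)%E | pi in PiP P]
      | v in [set: CX K]].
Proof. exact: theorem1'. Qed.
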